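(* Let $\alpha\in(0,1)$, $\theta=\alpha/2$, and let $0=t_0<\cdots<t_N=T$ be a time mesh with $\tau_k=t_k-t_{k-1}$ and $r_k=\tau_k/\tau_{k-1}$. Define $\beta_k:=\frac{2(1-\alpha/2)r_k}{1+\alpha+(1-\alpha/2)r_k}$ for $k\ge2$. Then, for $n\ge2$: (i) $I^{(n)}_{n-k}>(1+\beta_{k+1})\zeta^{(n)}_{n-k}$ for $1\le k\le n-1$, and $I^{(n)}_{n-k}-(1+\beta_{k+1})\zeta^{(n)}_{n-k}<I^{(n-1)}_{n-k-1}-(1+\beta_{k+1})\zeta^{(n-1)}_{n-k-1}$ for $1\le k\le n-2$; (ii) $J^{(n)}_{n-k}>3\zeta^{(n)}_{n-k}$ for $1\le k\le n-1$, and $J^{(n)}_{n-k}-3\zeta^{(n)}_{n-k}<J^{(n-1)}_{n-k-1}-3\zeta^{(n-1)}_{n-k-1}$ for $1\le k\le n-2$; (iii) $r_n\zeta^{(n)}_1<\frac{\alpha}{3(2-\alpha)}\varpi_n'(t_{n-1})$.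
   Context: $\omega_\beta(t)=t^{\beta-1}/\Gamma(\beta)$; $t_{n-\theta}=\theta t_{n-1}+(1-\theta)t_n$; $\varpi_n'(t):=\omega_{1-\alpha}(t_{n-\theta}-t)$ and $\varpi_n''(t):=\frac{d}{dt}\varpi_n'(t)$ for $0\le t<t_{n-\theta}$. For $1\le k\le n$: $\zeta^{(n)}_{n-k}:=\frac{2}{\tau_k^2}\int_{t_{k-1}}^{t_k}\big(s-\frac{t_{k-1}+t_k}{2}\big)\varpi_n'(s)\,ds$. For $1\le k\le n-1$: $$I^{(n)}_{n-k}:=\int_{t_{k-1}}^{t_k}\frac{t_k-t}{\tau_k}\varpi_n''(t)\,dt,\qquad J^{(n)}_{n-k}:=\int_{t_{k-1}}^{t_k}\frac{t-t_{k-1}}{\tau_k}\varpi_n''(t)\,dt.$$ *)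

(* Defs.v *)
From Stdlib Require Import Reals.
From Coquelicot Require Import Coquelicot.
Open Scope R_scope.

Definition Gamma (x : R) : R :=
  RInt_gen (fun s => Rpower s (x - 1) * exp (- s)) (at_right 0) (Rbar_locally p_infty).

Definition omega (beta t : R) : R := Rpower t (beta - 1) / Gamma beta.

Definition tau (t : nat -> R) (k : nat) : R := t k - t (k - 1)%nat.
Definition rr (t : nat -> R) (k : nat) : R := tau t k / tau t (k - 1)%nat.

Definition tnth (theta : R) (t : nat -> R) (n : nat) : R :=
  theta * t (n - 1)%nat + (1 - theta) * t n.

Definition varpi1 (alpha : R) (t : nat -> R) (n : nat) (s : R) : R :=
  omega (1 - alpha) (tnth (alpha / 2) t n - s).

Definition varpi2 (alpha : R) (t : nat -> R) (n : nat) (s : R) : R :=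
  Derive (varpi1 alpha t n) s.

(* zeta^{(n)}_{n-k}, indexed here by (n, k) *)
Definition zeta (alpha : R) (t : nat -> R) (n k : nat) : R :=
  2 / (tau t k) ^ 2 *
  RInt (fun s => (s - (t (k - 1)%nat + t k) / 2) * varpi1 alpha t n s) (t (k - 1)%nat) (t k).

(* I^{(n)}_{n-k} and J^{(n)}_{n-k}, indexed by (n, k) *)
Definition Icoef (alpha : R) (t : nat -> R) (n k : nat) : R :=
  RInt (fun s => (t k - s) / tau t k * varpi2 alpha t n s) (t (k - 1)%nat) (t k).

Definition Jcoef (alpha : R) (t : nat -> R) (n k : nat) : R :=
  RInt (fun s => (s - t (k - 1)%nat) / tau t k * varpi2 alpha t n s) (t (k - 1)%nat) (t k).

Definition betak (alpha : R) (t : nat -> R) (k : nat) : R :=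
  2 * (1 - alpha / 2) * rr t k / (1 + alpha + (1 - alpha / 2) * rr t k).

(* Main.v *)
Require Import Defs.
From Stdlib Require Import Reals Lra Lia Psatz.
From Coquelicot Require Import Coquelicot.
Open Scope R_scope.

Lemma Rpower_pos' (x e : R) : 0 < Rpower x e.
Proof. unfold Rpower. apply exp_pos. Qed.

Lemma is_derive_Rpower_pos (x e : R) : 0 < x ->
  is_derive (fun y => Rpower y e) x (e * Rpower x (e - 1)).
Proof.
  intros Hx. unfold Rpower.
  auto_derive; [assumption|].
  replace ((e - 1) * ln x) with (e * ln x + - ln x) by ring.
  rewrite exp_plus, exp_Ropp, exp_ln by assumption. field. lra.
Qed.

Lemma dpw (T e s : R) : s < T ->
  is_derive (fun y => Rpower (T - y) e) s (- (e * Rpower (T - s) (e - 1))).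
Proof.
  intros Hs. unfold Rpower.
  auto_derive; [lra|].
  replace ((e - 1) * ln (T - s)) with (e * ln (T - s) + - ln (T - s)) by ring.
  rewrite exp_plus, exp_Ropp, exp_ln by lra. change (T + - s) with (T - s).
  field. lra.
Qed.

Lemma cont_pw (T e s : R) : s < T -> continuous (fun y => Rpower (T - y) e) s.
Proof. intros Hs. apply (@ex_derive_continuous R_AbsRing R_NormedModule). eexists. apply dpw; exact Hs. Qed.

Lemma cont_pterm (P : R -> R) (T e s : R) : (forall y, continuous P y) -> s < T ->
  continuous (fun y => P y * Rpower (T - y) e) s.
Proof.
  intros HP Hs. apply (continuous_mult P (fun y => Rpower (T - y) e)); auto.
  apply cont_pw; auto.
Qed.

Lemma cont_plus' (f g : R -> R) s : continuous f s -> continuous g s ->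
  continuous (fun y => f y + g y) s.
Proof. intros; apply (continuous_plus f g); auto. Qed.

Lemma cont_mult' (f g : R -> R) s : continuous f s -> continuous g s ->
  continuous (fun y => f y * g y) s.
Proof. intros; apply (continuous_mult f g); auto. Qed.

Lemma cont_const' (k s : R) : continuous (fun _ : R => k) s.
Proof. apply continuous_const. Qed.

Lemma cont_opp' (f : R -> R) s : continuous f s -> continuous (fun y => - f y) s.
Proof. intros; apply (continuous_opp f); auto. Qed.

Lemma ex_RInt_cont (f : R -> R) a b : a <= b -> (forall s, a <= s <= b -> continuous f s) ->
  ex_RInt f a b.
Proof.
  intros Hab H. apply (@ex_RInt_continuous R_CompleteNormedModule). intros z Hz.
  rewrite Rmin_left in Hz by lra. rewrite Rmax_right in Hz by lra. auto.
Qed.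

Lemma RInt_plus' (f g : R -> R) a b : a <= b ->
  (forall s, a <= s <= b -> continuous f s) -> (forall s, a <= s <= b -> continuous g s) ->
  RInt (fun s => f s + g s) a b = RInt f a b + RInt g a b.
Proof.
  intros Hab Hf Hg. apply (RInt_plus f g); apply ex_RInt_cont; auto.
Qed.

Lemma RInt_minus' (f g : R -> R) a b : a <= b ->
  (forall s, a <= s <= b -> continuous f s) -> (forall s, a <= s <= b -> continuous g s) ->
  RInt (fun s => f s - g s) a b = RInt f a b - RInt g a b.
Proof.
  intros Hab Hf Hg. apply (RInt_minus f g); apply ex_RInt_cont; auto.
Qed.

Lemma RInt_opp' (f : R -> R) a b : a <= b ->
  (forall s, a <= s <= b -> continuous f s) ->
  RInt (fun s => - f s) a b = - RInt f a b.
Proof. intros. exact (@RInt_opp R_CompleteNormedModule f a b (ex_RInt_cont f a b H H0)). Qed.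

Lemma RInt_scal' (f : R -> R) a b l : a <= b ->
  (forall s, a <= s <= b -> continuous f s) ->
  RInt (fun s => l * f s) a b = l * RInt f a b.
Proof. intros. exact (@RInt_scal R_CompleteNormedModule f a b l (ex_RInt_cont f a b H H0)). Qed.

Lemma RInt_deriv (G dG : R -> R) a b : a <= b ->
  (forall s, a <= s <= b -> is_derive G s (dG s)) ->
  (forall s, a <= s <= b -> continuous dG s) ->
  RInt dG a b = G b - G a.
Proof.
  intros Hab HG Hc. apply is_RInt_unique.
  apply (is_RInt_derive G dG); intros x Hx;
  rewrite Rmin_left in Hx by lra; rewrite Rmax_right in Hx by lra; auto.
Qed.

Lemma key (f G dG : R -> R) (a b : R) :
  a < b ->
  (forall s, a <= s <= b -> continuous f s) ->
  (forall s, a <= s <= b -> is_derive G s (dG s)) ->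
  (forall s, a <= s <= b -> continuous dG s) ->
  G a <= G b ->
  (forall s, a < s < b -> dG s < f s) ->
  0 < RInt f a b.
Proof.
  intros Hab Hf HG HdG Hba Hlt.
  assert (E : RInt f a b = RInt (fun s => f s - dG s) a b + RInt dG a b).
  { rewrite RInt_minus'; try lra; auto. }
  rewrite E, (RInt_deriv G dG) by (auto; lra).
  assert (0 < RInt (fun s => f s - dG s) a b).
  { apply RInt_gt_0; auto. intros x Hx. specialize (Hlt x Hx). lra.
    intros x Hx. apply (continuous_minus f dG); auto. }
  lra.
Qed.

Lemma is_derive_val (f : R -> R) x l l' : is_derive f x l -> l = l' -> is_derive f x l'.
Proof. intros H E; subst; exact H. Qed.

Lemma deriv_pterm (A : R -> R) dA0 T e s : is_derive A s dA0 -> s < T ->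
  is_derive (fun y => A y * Rpower (T - y) e) s
    (dA0 * Rpower (T - s) e + (- e * A s) * Rpower (T - s) (e - 1)).
Proof.
  intros HA Hs.
  eapply is_derive_val.
  - apply (is_derive_mult A (fun y => Rpower (T - y) e) s dA0 _ HA (dpw T e s Hs)).
    intros; apply Rmult_comm.
  - unfold plus, mult; simpl. ring.
Qed.

Lemma master a b T (p1 p2 A dA B dB : R -> R) e1 e2 ea eb :
 a < b -> b < T ->
 (forall y, continuous p1 y) -> (forall y, continuous p2 y) ->
 (forall y, continuous A y) -> (forall y, continuous dA y) ->
 (forall y, continuous B y) -> (forall y, continuous dB y) ->
 (forall y, is_derive A y (dA y)) -> (forall y, is_derive B y (dB y)) ->
 A a * Rpower (T - a) ea + B a * Rpower (T - a) eb
   <= A b * Rpower (T - b) ea + B b * Rpower (T - b) eb ->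
 (forall s, a < s < b ->
    dA s * Rpower (T - s) ea + (- ea * A s) * Rpower (T - s) (ea - 1)
    + (dB s * Rpower (T - s) eb + (- eb * B s) * Rpower (T - s) (eb - 1))
    < p1 s * Rpower (T - s) e1 + p2 s * Rpower (T - s) e2) ->
 0 < RInt (fun s => p1 s * Rpower (T - s) e1) a b
     + RInt (fun s => p2 s * Rpower (T - s) e2) a b.
Proof.
  intros Hab HbT Hp1 Hp2 HA HdA HB HdB HDA HDB Hbd Hpt.
  rewrite <- RInt_plus'; try lra.
  2,3: intros s Hs; apply cont_pterm; auto; lra.
  apply (key _ (fun y => A y * Rpower (T - y) ea + B y * Rpower (T - y) eb)
     (fun s => dA s * Rpower (T - s) ea + (- ea * A s) * Rpower (T - s) (ea - 1)
    + (dB s * Rpower (T - s) eb + (- eb * B s) * Rpower (T - s) (eb - 1)))); auto.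
  - intros s Hs. apply cont_plus'; apply cont_pterm; auto; lra.
  - intros s Hs. apply (is_derive_plus (fun y => A y * Rpower (T - y) ea)
                    (fun y => B y * Rpower (T - y) eb)); apply deriv_pterm; auto; lra.
  - intros s Hs. apply cont_plus'; apply cont_plus'; try apply cont_pterm; auto; try lra;
    intros y; apply cont_mult'; auto; apply cont_const'.
Qed.

Lemma PWQ (u e e0 : R) (k : nat) : 0 < u -> e = e0 + INR k -> Rpower u e = u ^ k * Rpower u e0.
Proof. intros Hu E; subst. rewrite Rpower_plus, Rpower_pow by exact Hu. ring. Qed.

Ltac pwq u e0 :=
  repeat match goal with
  | |- context [Rpower u ?e] =>
    tryif constr_eq e e0 then fail else
    first [ rewrite (PWQ u e e0 0) by (first [lra | simpl; ring])
          | rewrite (PWQ u e e0 1) by (first [lra | simpl; ring])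
          | rewrite (PWQ u e e0 2) by (first [lra | simpl; ring])
          | rewrite (PWQ u e e0 3) by (first [lra | simpl; ring])
          | rewrite (PWQ u e e0 4) by (first [lra | simpl; ring]) ]
  end.

Ltac polycont := intros ?y; apply (@ex_derive_continuous R_AbsRing R_NormedModule); auto_derive; repeat split; auto.
Ltac polyder := intros ?y; auto_derive; [exact I | first [ring | field; lra]].

Ltac pos := repeat (first [ assumption | lra | apply Rmult_lt_0_compat | apply Rdiv_lt_0_compat
   | apply Rinv_0_lt_compat | apply pow_lt | apply Rplus_lt_0_compat ]).

Lemma P2pos a b c al T : a < b -> b < T -> 0 < al < 1 -> 0 < c ->
 0 < RInt (fun s => ((s - a)/(b-a)*(c*al)) * Rpower (T - s) (-al-1)) a b
   + RInt (fun s => (-(3*(2/(b-a)^2))*((s - (a+b)/2)*c)) * Rpower (T - s) (-al)) a b.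
Proof.
  intros Hab HbT Hal Hc.
  apply (master a b T _ _ (fun s => 3*(c/(b-a)^2)*(s-a)*(b-s)) (fun s => 3*(c/(b-a)^2)*((b-s) - (s-a)))
    (fun s => -(c*al/(b-a)^2)*(s-a)^2*(b-s)) (fun s => -(c*al/(b-a)^2)*(2*(s-a)*(b-s) - (s-a)^2))
    (-al-1) (-al) (-al) (-al-1)); auto.
  all: try polycont.
  all: try polyder.
  - apply Req_le; ring.
  - intros s Hs.
    pwq (T - s) (-al-3).
    set (Q := Rpower (T - s) (-al-3)).
    assert (HQ : 0 < Q) by apply Rpower_pos'.
    apply Rlt_0_minus.
    replace (_ - _) with (Q * ((c*al/(b-a)^2)*(al+1)*(s-a)^2*(b-s)*(T-s))) by (field; lra).
    pos.
Qed.

Lemma neg_form (p : R -> R) a b T e e' : a <= b -> b < T -> (forall y, continuous p y) ->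
  RInt (fun s => p s * (e * Rpower (T - s) e')) a b
  = - RInt (fun s => (- (p s * e)) * Rpower (T - s) e') a b.
Proof.
  intros Hab HbT Hp.
  rewrite <- (RInt_opp' (fun s => (- (p s * e)) * Rpower (T - s) e') a b Hab).
  - apply RInt_ext. intros x _.
    change (p x * (e * Rpower (T - x) e') = - (- (p x * e) * Rpower (T - x) e')). ring.
  - intros s Hs. apply cont_pterm; [|lra]. intros y. apply cont_opp'. apply cont_mult'; auto. apply cont_const'.
Qed.

Lemma P2neg a b c al T : a < b -> b < T -> 0 < al < 1 -> 0 < c ->
 RInt (fun s => ((s - a)/(b-a)*(c*al)) * ((-al-1) * Rpower (T - s) (-al-1-1))) a b
   + RInt (fun s => (-(3*(2/(b-a)^2))*((s - (a+b)/2)*c)) * ((-al) * Rpower (T - s) (-al-1))) a b < 0.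
Proof.
  intros Hab HbT Hal Hc.
  rewrite (neg_form (fun s => ((s - a)/(b-a)*(c*al)))) by (try lra; polycont).
  rewrite (neg_form (fun s => (-(3*(2/(b-a)^2))*((s - (a+b)/2)*c)))) by (try lra; polycont).
  cut (0 < RInt (fun s => (- ((s - a)/(b-a)*(c*al) * (-al-1))) * Rpower (T - s) (-al-1-1)) a b
   + RInt (fun s => (- ((-(3*(2/(b-a)^2))*((s - (a+b)/2)*c)) * (-al))) * Rpower (T - s) (-al-1)) a b); [lra|].
  apply (master a b T _ _ (fun s => 3*al*(c/(b-a)^2)*(s-a)*(b-s)) (fun s => 3*al*(c/(b-a)^2)*((b-s) - (s-a)))
    (fun s => -(al+1)*(c*al/(b-a)^2)*(s-a)^2*(b-s)) (fun s => -(al+1)*(c*al/(b-a)^2)*(2*(s-a)*(b-s) - (s-a)^2))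
    (-al-1-1) (-al-1) (-al-1) (-al-2)); auto.
  all: try polycont.
  all: try polyder.
  - apply Req_le; ring.
  - intros s Hs.
    pwq (T - s) (-al-3).
    set (Q := Rpower (T - s) (-al-3)).
    assert (HQ : 0 < Q) by apply Rpower_pos'.
    apply Rlt_0_minus.
    replace (_ - _) with (Q * ((al+1)*(c*al/(b-a)^2)*(al+2)*(s-a)^2*(b-s))) by (field; lra).
    pos.
Qed.

Lemma S_nonneg al D C h d : 0 < al -> 0 <= D -> D * h <= d -> C = 1 + 2*D/(1+al+D) ->
  0 <= 2*C*d - (C-1)*((al+1)*h + 3*d).
Proof.
  intros Hal HD Hd HC. subst C.
  replace (2 * (1 + 2 * D / (1 + al + D)) * d - (1 + 2 * D / (1 + al + D) - 1) * ((al + 1) * h + 3 * d))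
    with (2*(1+al)*(d - D*h)/(1+al+D)) by (field; lra).
  apply Rmult_le_pos. nra. left; apply Rinv_0_lt_compat; lra.
Qed.

Lemma P1pos a b c al T D C : a < b -> b < T -> 0 < al < 1 -> 0 < c -> 0 <= D -> D*(b-a) <= T - b ->
 C = 1 + 2*D/(1+al+D) ->
 0 < RInt (fun s => ((b - s)/(b-a)*(c*al)) * Rpower (T - s) (-al-1)) a b
   + RInt (fun s => (-(C*(2/(b-a)^2))*((s - (a+b)/2)*c)) * Rpower (T - s) (-al)) a b.
Proof.
  intros Hab HbT Hal Hc HD HDd HC.
  assert (HS := S_nonneg al D C (b-a) (T-b) ltac:(lra) HD HDd HC).
  set (S := 2*C*(T-b) - (C-1)*((al+1)*(b-a) + 3*(T-b))) in HS.
  set (K := C/((al+1)*(b-a)+3*(T-b))).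
  assert (HC1 : 1 <= C). { subst C. assert (0 <= 2*D/(1+al+D)). apply Rmult_le_pos; [lra| left; apply Rinv_0_lt_compat; lra]. lra. }
  assert (HK : 0 < K). { unfold K. apply Rdiv_lt_0_compat; nra. }
  apply (master a b T _ _ (fun s => C*(c/(b-a)^2)*(s-a)*(b-s)) (fun s => C*(c/(b-a)^2)*((b-s) - (s-a)))
    (fun s => (c*al/(b-a)^2)*K*(T-b)*(b-s)^2*(s-a)) (fun s => (c*al/(b-a)^2)*K*(T-b)*(-2*(b-s)*(s-a) + (b-s)^2))
    (-al-1) (-al) (-al) (-al-1)); auto.
  all: try polycont.
  all: try polyder.
  - apply Req_le; ring.
  - intros s Hs.
    pwq (T - s) (-al-3).
    set (Q := Rpower (T - s) (-al-3)).
    assert (HQ : 0 < Q) by apply Rpower_pos'.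
    apply Rlt_0_minus.
    replace (_ - _) with (Q * ((c*al/(b-a)^2)*(K*(al+1)*((b-a)+(T-b))*(b-s)^3*(T-s)
        + (T-s)^2*(b-s)*(b-a)*S/((al+1)*(b-a)+3*(T-b))))) by (unfold K, S; field; nra).
    apply Rmult_lt_0_compat; auto.
    apply Rmult_lt_0_compat. pos.
    apply Rplus_lt_le_0_compat. pos.
    apply Rmult_le_pos; [| left; apply Rinv_0_lt_compat; nra].
    apply Rmult_le_pos; auto. left; pos.
Qed.

Lemma P1neg a b c al T D C : a < b -> b < T -> 0 < al < 1 -> 0 < c -> 0 <= D -> D*(b-a) <= T - b ->
 C = 1 + 2*D/(1+al+D) ->
 RInt (fun s => ((b - s)/(b-a)*(c*al)) * ((-al-1) * Rpower (T - s) (-al-1-1))) a b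
   + RInt (fun s => (-(C*(2/(b-a)^2))*((s - (a+b)/2)*c)) * ((-al) * Rpower (T - s) (-al-1))) a b < 0.
Proof.
  intros Hab HbT Hal Hc HD HDd HC.
  rewrite (neg_form (fun s => ((b - s)/(b-a)*(c*al)))) by (try lra; polycont).
  rewrite (neg_form (fun s => (-(C*(2/(b-a)^2))*((s - (a+b)/2)*c)))) by (try lra; polycont).
  cut (0 < RInt (fun s => (- ((b - s)/(b-a)*(c*al) * (-al-1))) * Rpower (T - s) (-al-1-1)) a b
   + RInt (fun s => (- ((-(C*(2/(b-a)^2))*((s - (a+b)/2)*c)) * (-al))) * Rpower (T - s) (-al-1)) a b); [lra|].
  assert (HS := S_nonneg al D C (b-a) (T-b) ltac:(lra) HD HDd HC).
  set (S := 2*C*(T-b) - (C-1)*((al+1)*(b-a) + 3*(T-b))) in HS.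
  set (K := C/((al+1)*(b-a)+3*(T-b))).
  assert (HC1 : 1 <= C). { subst C. assert (0 <= 2*D/(1+al+D)). apply Rmult_le_pos; [lra| left; apply Rinv_0_lt_compat; lra]. lra. }
  assert (HK : 0 < K). { unfold K. apply Rdiv_lt_0_compat; nra. }
  apply (master a b T _ _ (fun s => al*C*(c/(b-a)^2)*(s-a)*(b-s)) (fun s => al*C*(c/(b-a)^2)*((b-s) - (s-a)))
    (fun s => (al+1)*(c*al/(b-a)^2)*K*((T-b)*(b-s)^2*(s-a) + (b-s)^3*(s-a)/3))
    (fun s => (al+1)*(c*al/(b-a)^2)*K*((T-b)*(-2*(b-s)*(s-a) + (b-s)^2) + (-3*(b-s)^2*(s-a) + (b-s)^3)/3))
    (-al-1-1) (-al-1) (-al-1) (-al-2)); auto.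
  all: try polycont.
  all: try polyder.
  - apply Req_le; field; lra.
  - intros s Hs.
    pwq (T - s) (-al-3).
    set (Q := Rpower (T - s) (-al-3)).
    assert (HQ : 0 < Q) by apply Rpower_pos'.
    apply Rlt_0_minus.
    replace (_ - _) with (Q * ((al+1)*(c*al/(b-a)^2)*(K*(b-s)^3*(2*(al+2)*(b-a)/3 + (T-b)*(al+2-4/3) - (4-(al+2))*(b-s)/3)
        + (T-s)*(b-s)*(b-a)*S/((al+1)*(b-a)+3*(T-b))))) by (unfold K, S; field; nra).
    apply Rmult_lt_0_compat; auto.
    apply Rmult_lt_0_compat. pos.
    apply Rplus_lt_le_0_compat. apply Rmult_lt_0_compat. pos. nra.
    apply Rmult_le_pos; [| left; apply Rinv_0_lt_compat; nra].
    apply Rmult_le_pos; auto. left; pos.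
Qed.

Lemma dpw2 (t e u : R) : t < u ->
  is_derive (fun z => Rpower (z - t) e) u (e * Rpower (u - t) (e - 1)).
Proof.
  intros Hs. unfold Rpower.
  auto_derive; [lra|].
  replace ((e - 1) * ln (u - t)) with (e * ln (u - t) + - ln (u - t)) by ring.
  rewrite exp_plus, exp_Ropp, exp_ln by lra.
  change (u + - t) with (u - t).
  field. lra.
Qed.

Lemma ball_R (x y e : R) : ball x e y <-> Rabs (y - x) < e.
Proof. unfold ball; simpl; unfold AbsRing_ball, abs, minus, plus, opp; simpl. tauto. Qed.

Lemma cont_to_pt (f : R -> R) x : continuous f x -> continuity_pt f x.
Proof. intros H. apply continuity_pt_filterlim. exact H. Qed.

Lemma param_deriv (p : R -> R) a b e T : a <= b -> b < T -> (forall y, continuous p y) ->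
  is_derive (fun T' => RInt (fun s => p s * Rpower (T' - s) e) a b) T
    (RInt (fun s => p s * (e * Rpower (T - s) (e - 1))) a b).
Proof.
  intros Hab HbT Hp.
  assert (Hd : forall u t, t < u -> is_derive (fun z => p t * Rpower (z - t) e) u (p t * (e * Rpower (u - t) (e - 1)))).
  { intros u t Htu. eapply is_derive_val.
    - apply (is_derive_scal (fun z => Rpower (z - t) e) u (p t)). apply dpw2; exact Htu.
    - unfold scal; simpl; unfold mult; simpl. ring. }
  assert (Hloc : forall P : R -> Prop, (forall y, b < y -> P y) -> locally T P).
  { intros P HP. exists (mkposreal (T - b) ltac:(lra)). intros y Hy. apply ball_R in Hy. simpl in Hy.
    apply HP. apply Rabs_lt_between' in Hy. lra. }
  eapply is_derive_val.
  - apply (is_derive_RInt_param (fun u t => p t * Rpower (u - t) e) a b T).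
    + apply Hloc. intros y Hy t Ht. rewrite Rmin_left, Rmax_right in Ht by lra.
      eexists. apply Hd. lra.
    + intros t Ht. rewrite Rmin_left, Rmax_right in Ht by lra.
      apply (continuity_2d_pt_ext_loc (fun u v => p v * (e * Rpower (u - v) (e - 1)))).
      * exists (mkposreal ((T - b)/2) ltac:(lra)). intros u v Hu Hv. simpl in Hu, Hv.
        apply Rabs_lt_between' in Hu. apply Rabs_lt_between' in Hv.
        symmetry. apply is_derive_unique. apply Hd. lra.
      * apply (continuity_2d_pt_mult (fun u v => p v) (fun u v => e * Rpower (u - v) (e - 1))).
        -- apply (continuity_1d_2d_pt_comp p (fun u v => v)). apply cont_to_pt; auto.
           apply continuity_2d_pt_id2.
        -- apply (continuity_1d_2d_pt_comp (fun z => e * Rpower z (e - 1)) (fun u v => u - v)).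
           ++ apply cont_to_pt. apply (@ex_derive_continuous R_AbsRing R_NormedModule).
              eexists. apply (is_derive_scal (fun z => Rpower z (e - 1))). apply is_derive_Rpower_pos. lra.
           ++ apply continuity_2d_pt_minus; [apply continuity_2d_pt_id1 | apply continuity_2d_pt_id2].
    + apply Hloc. intros y Hy. apply ex_RInt_cont; auto. intros s Hs.
      apply cont_mult'; auto.
      apply (@ex_derive_continuous R_AbsRing R_NormedModule). eexists.
      eapply is_derive_val. apply (dpw y e s). lra. reflexivity.
  - apply RInt_ext. intros x Hx. rewrite Rmin_left, Rmax_right in Hx by lra.
    apply is_derive_unique. apply Hd. lra.
Qed.


Lemma mono_gen (p1 p2 : R -> R) e1 e2 a b T1 T2 : a <= b -> b < T2 -> T2 < T1 ->
  (forall y, continuous p1 y) -> (forall y, continuous p2 y) ->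
  (forall T, T2 <= T <= T1 -> RInt (fun s => p1 s * (e1 * Rpower (T - s) (e1 - 1))) a b
       + RInt (fun s => p2 s * (e2 * Rpower (T - s) (e2 - 1))) a b < 0) ->
  RInt (fun s => p1 s * Rpower (T1 - s) e1) a b + RInt (fun s => p2 s * Rpower (T1 - s) e2) a b
  < RInt (fun s => p1 s * Rpower (T2 - s) e1) a b + RInt (fun s => p2 s * Rpower (T2 - s) e2) a b.
Proof.
  intros Hab HbT H12 Hp1 Hp2 Hneg.
  set (F := fun T => RInt (fun s => p1 s * Rpower (T - s) e1) a b + RInt (fun s => p2 s * Rpower (T - s) e2) a b).
  set (dF := fun T => RInt (fun s => p1 s * (e1 * Rpower (T - s) (e1 - 1))) a b
       + RInt (fun s => p2 s * (e2 * Rpower (T - s) (e2 - 1))) a b).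
  assert (HD : forall T, b < T -> is_derive F T (dF T)).
  { intros T HT. unfold F, dF.
    apply (is_derive_plus (fun T => RInt (fun s => p1 s * Rpower (T - s) e1) a b)
                          (fun T => RInt (fun s => p2 s * Rpower (T - s) e2) a b));
    apply param_deriv; auto. }
  assert (Hneg' : forall T, T2 <= T <= T1 -> dF T < 0) by (intros; unfold dF; apply Hneg; auto).
  change (F T1 < F T2). clearbody F dF.
  destruct (MVT_gen F T2 T1 dF) as [x [Hx E]].
  - intros x Hx. rewrite Rmin_left, Rmax_right in Hx by lra. apply HD. lra.
  - intros x Hx. rewrite Rmin_left, Rmax_right in Hx by lra. apply cont_to_pt.
    apply (@ex_derive_continuous R_AbsRing R_NormedModule). eexists. apply HD. lra.
  - rewrite Rmin_left, Rmax_right in Hx by lra.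
    assert (dF x < 0) by (apply Hneg'; lra).
    assert (0 < (- dF x) * (T1 - T2)) by (apply Rmult_lt_0_compat; lra).
    lra.
Qed.


Lemma RInt_ext_R (f g : R -> R) a b : a <= b -> (forall x, a < x < b -> f x = g x) ->
  RInt f a b = RInt g a b.
Proof.
  intros Hab H. apply RInt_ext. intros x Hx. rewrite Rmin_left, Rmax_right in Hx by lra. apply H; auto.
Qed.

Lemma P3 a b c al T : a < b -> b < T -> 0 < al < 1 -> 0 < c ->
  RInt (fun s => (s - (a+b)/2) * (c * Rpower (T - s) (-al))) a b
  < (c*al/2) * Rpower (T - b) (-al-1) * (b-a)^3/6.
Proof.
  intros Hab HbT Hal Hc.
  set (k := (c*al/2) * Rpower (T - b) (-al-1)).
  assert (Hm := master a b T (fun s => k * ((s-a)*(b-s))) (fun s => - ((s - (a+b)/2) * c))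
    (fun s => (c/2)*(s-a)*(b-s)) (fun s => (c/2)*((b-s)-(s-a))) (fun _ => 0) (fun _ => 0)
    0 (-al) (-al) (-al) Hab HbT).
  assert (E1 : RInt (fun s => k * ((s - a) * (b - s)) * Rpower (T - s) 0) a b = k * (b-a)^3/6).
  { rewrite (RInt_ext_R _ (fun s => k * ((s - a) * (b - s)))).
    2: lra.
    2: { intros x Hx. rewrite Rpower_O by lra. ring. }
    rewrite (RInt_deriv (fun s => k * ((s-a)^2/2*(b-s) + (s-a)^3/6)) (fun s => k * ((s - a) * (b - s)))).
    - match goal with |- ?x = ?y => change (@eq R x y) end. field.
    - lra.
    - intros; auto_derive; [exact I| ]. match goal with |- ?x = ?y => change (@eq R x y) end. field.
    - intros s _. apply (@ex_derive_continuous R_AbsRing R_NormedModule). auto_derive. exact I. }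
  assert (E2 : RInt (fun s => - ((s - (a+b)/2) * c) * Rpower (T - s) (-al)) a b
     = - RInt (fun s => (s - (a+b)/2) * (c * Rpower (T - s) (-al))) a b).
  { rewrite <- RInt_opp'; try lra.
    - apply RInt_ext_R; [lra|]. intros x _. ring.
    - intros s Hs. apply cont_mult'. apply (@ex_derive_continuous R_AbsRing R_NormedModule); auto_derive; exact I. apply cont_mult'. apply cont_const'. apply cont_pw; lra. }
  cbv beta in Hm. rewrite E1, E2 in Hm.
  cut (0 < k * (b - a) ^ 3 / 6 + - RInt (fun s => (s - (a+b)/2) * (c * Rpower (T - s) (-al))) a b).
  { unfold k. lra. }
  apply Hm.
  all: try polycont.
  all: try polyder.
  - apply Req_le; ring.
  - intros s Hs.
    assert (H : Rpower (T - s) (-al-1) < Rpower (T - b) (-al-1)).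
    { replace (-al-1) with (-(al+1)) by ring. rewrite !Rpower_Ropp.
      apply Rinv_lt_contravar. apply Rmult_lt_0_compat; apply Rpower_pos'.
      apply Rlt_Rpower_l; lra. }
    rewrite Rpower_O by lra.
    pwq (T - s) (-al-3).
    rewrite (PWQ (T - s) (-al-1) (-al-3) 2) in H by (first [lra | simpl; ring]).
    set (Q := Rpower (T - s) (-al-3)) in *.
    apply Rlt_0_minus.
    replace (_ - _) with ((c*al/2)*(s-a)*(b-s)*(Rpower (T - b) (-al-1) - (T-s)^2*Q)) by (unfold k; field; lra).
    pos.
Qed.

Ltac toR := match goal with |- ?x = ?y => change (@eq R x y) end.

Lemma gf_cont x s : 0 < s -> continuous (fun s => Rpower s (x - 1) * exp (- s)) s.
Proof.
  intros Hs. apply cont_mult'.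
  - apply (@ex_derive_continuous R_AbsRing R_NormedModule). eexists. apply is_derive_Rpower_pos; auto.
  - apply (@ex_derive_continuous R_AbsRing R_NormedModule). auto_derive. exact I.
Qed.

Lemma gf_ex x u v : 0 < u -> 0 < v -> ex_RInt (fun s => Rpower s (x - 1) * exp (- s)) u v.
Proof.
  intros Hu Hv. apply (@ex_RInt_continuous R_CompleteNormedModule). intros z Hz.
  apply gf_cont. assert (0 < Rmin u v) by (apply Rmin_glb_lt; auto). lra.
Qed.

Lemma gf_pos x s : 0 < s -> 0 < Rpower s (x - 1) * exp (- s).
Proof. intros; apply Rmult_lt_0_compat; [apply Rpower_pos' | apply exp_pos]. Qed.

Lemma gf_RInt_ge0 x u v : 0 < u <= v -> 0 <= RInt (fun s => Rpower s (x - 1) * exp (- s)) u v.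
Proof.
  intros H. apply RInt_ge_0; [lra | apply gf_ex; lra |]. intros s Hs. left; apply gf_pos; lra.
Qed.

Lemma gf_bound0 x u v : 0 < x -> 0 < u <= v ->
  RInt (fun s => Rpower s (x - 1) * exp (- s)) u v <= (Rpower v x - Rpower u x) / x.
Proof.
  intros Hx H.
  assert (E : RInt (fun s => Rpower s (x - 1)) u v = (Rpower v x - Rpower u x) / x).
  { rewrite (RInt_deriv (fun s => Rpower s x / x) (fun s => Rpower s (x - 1))); [toR; field; lra | lra | |].
    - intros s Hs. eapply is_derive_val.
      + apply (is_derive_scal_l (fun s => Rpower s x) s (x * Rpower s (x - 1)) (/ x)).
        apply is_derive_Rpower_pos; lra.
      + unfold scal; simpl; unfold mult; simpl. field. lra.
    - intros s Hs. apply (@ex_derive_continuous R_AbsRing R_NormedModule). eexists. apply is_derive_Rpower_pos; lra. }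
  rewrite <- E. apply RInt_le; [lra | apply gf_ex; lra | |].
  - apply (@ex_RInt_continuous R_CompleteNormedModule). intros z Hz.
    rewrite Rmin_left, Rmax_right in Hz by lra.
    apply (@ex_derive_continuous R_AbsRing R_NormedModule). eexists. apply is_derive_Rpower_pos; lra.
  - intros s Hs. rewrite <- (Rmult_1_r (Rpower s (x - 1))) at 2.
    apply Rmult_le_compat_l; [left; apply Rpower_pos'|].
    rewrite <- exp_0. destruct (Req_dec s 0); [lra|]. left; apply exp_increasing; lra.
Qed.

Lemma gf_boundinf x u v : x <= 1 -> 1 <= u <= v ->
  RInt (fun s => Rpower s (x - 1) * exp (- s)) u v <= exp (- u) - exp (- v).
Proof.
  intros Hx H.
  assert (E : RInt (fun s => exp (- s)) u v = exp (- u) - exp (- v)).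
  { rewrite (RInt_deriv (fun s => - exp (- s)) (fun s => exp (- s))); [toR; ring | lra | |].
    - intros s Hs. auto_derive; [exact I | ring].
    - intros s Hs. apply (@ex_derive_continuous R_AbsRing R_NormedModule). auto_derive. exact I. }
  rewrite <- E. apply RInt_le; [lra | apply gf_ex; lra | |].
  - apply (@ex_RInt_continuous R_CompleteNormedModule). intros z Hz.
    apply (@ex_derive_continuous R_AbsRing R_NormedModule). auto_derive. exact I.
  - intros s Hs. rewrite <- (Rmult_1_l (exp (- s))) at 2.
    apply Rmult_le_compat_r; [left; apply exp_pos|].
    unfold Rpower. rewrite <- exp_0 at 2.
    assert (0 <= ln s). { rewrite <- ln_1. apply ln_le; lra. }
    assert ((x - 1) * ln s <= 0) by nra.
    destruct (Req_dec ((x - 1) * ln s) 0) as [E0|E0]; [rewrite E0; lra|].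
    left; apply exp_increasing. lra.
Qed.

Lemma GC0 x : 0 < x < 1 -> forall eps : posreal, exists P, at_right 0 P /\ forall u v, P u -> P v -> ball (RInt (fun s => Rpower s (x - 1) * exp (- s)) 1 u) eps (RInt (fun s => Rpower s (x - 1) * exp (- s)) 1 v).
Proof.
  intros Hx.
  set (f := fun s => Rpower s (x - 1) * exp (- s)).
  set (G := fun y => RInt f 1 y).
  assert (Hex : forall u v, 0 < u -> 0 < v -> ex_RInt f u v) by (intros; apply gf_ex; auto).
  assert (Gdiff : forall u v, 0 < u -> 0 < v -> G v - G u = RInt f u v).
  { intros u v Hu Hv. unfold G.
    assert (H := RInt_Chasles f 1 u v (Hex 1 u ltac:(lra) Hu) (Hex u v Hu Hv)).
    change (RInt f 1 u + RInt f u v = RInt f 1 v) in H. lra. }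
  assert (Hswap : forall u v, 0 < u -> 0 < v -> RInt f v u = - RInt f u v).
  { intros u v Hu Hv. rewrite <- (opp_RInt_swap f u v (Hex u v Hu Hv)). reflexivity. }
  assert (Hge : forall u v, 0 < u <= v -> 0 <= RInt f u v) by (intros; apply gf_RInt_ge0; auto).
  assert (XX : forall eps : posreal, exists P, at_right 0 P /\ forall u v, P u -> P v -> ball (G u) eps (G v)).
  { intros eps.
    set (d := Rpower (eps * x / 2) (/ x)).
    assert (Hd : 0 < d) by apply Rpower_pos'.
    assert (Hdx : Rpower d x = eps * x / 2).
    { unfold d. rewrite Rpower_mult. rewrite Rinv_l by lra. apply Rpower_1.
      apply Rmult_lt_0_compat; [|lra]. apply Rmult_lt_0_compat; [apply cond_pos | lra]. }
    assert (Hb : forall u v, 0 < u <= v -> v < d -> RInt f u v < eps).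
    { intros u v Huv Hvd.
      assert (H1 := gf_bound0 x u v ltac:(lra) Huv). fold f in H1.
      assert (H2 : Rpower v x < Rpower d x) by (apply Rlt_Rpower_l; lra).
      assert (H3 : 0 < Rpower u x) by apply Rpower_pos'.
      assert ((Rpower v x - Rpower u x) / x < eps).
      { apply (Rmult_lt_reg_r x); [lra|]. unfold Rdiv. rewrite Rmult_assoc, Rinv_l by lra.
        rewrite Hdx in H2. pose proof (cond_pos eps). nra. }
      lra. }
    exists (fun y => 0 < y < d). split.
    - exists (mkposreal d Hd). intros y Hy Hy0. apply ball_R in Hy. simpl in Hy.
      apply Rabs_lt_between' in Hy. lra.
    - intros u v Hu Hv. apply ball_R. rewrite Gdiff by lra.
      destruct (Rle_dec u v).
      + rewrite Rabs_pos_eq by (apply Hge; lra). apply Hb; lra.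
      + rewrite (Hswap v u) by lra. rewrite Rabs_Ropp. rewrite Rabs_pos_eq by (apply Hge; lra). apply Hb; lra. }
  exact XX.
Qed.

Lemma GCI x : 0 < x < 1 -> forall eps : posreal, exists P, Rbar_locally p_infty P /\ forall u v, P u -> P v -> ball (RInt (fun s => Rpower s (x - 1) * exp (- s)) 1 u) eps (RInt (fun s => Rpower s (x - 1) * exp (- s)) 1 v).
Proof.
  intros Hx.
  set (f := fun s => Rpower s (x - 1) * exp (- s)).
  set (G := fun y => RInt f 1 y).
  assert (Hex : forall u v, 0 < u -> 0 < v -> ex_RInt f u v) by (intros; apply gf_ex; auto).
  assert (Gdiff : forall u v, 0 < u -> 0 < v -> G v - G u = RInt f u v).
  { intros u v Hu Hv. unfold G.
    assert (H := RInt_Chasles f 1 u v (Hex 1 u ltac:(lra) Hu) (Hex u v Hu Hv)).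
    change (RInt f 1 u + RInt f u v = RInt f 1 v) in H. lra. }
  assert (Hswap : forall u v, 0 < u -> 0 < v -> RInt f v u = - RInt f u v).
  { intros u v Hu Hv. rewrite <- (opp_RInt_swap f u v (Hex u v Hu Hv)). reflexivity. }
  assert (Hge : forall u v, 0 < u <= v -> 0 <= RInt f u v) by (intros; apply gf_RInt_ge0; auto).
  assert (XX : forall eps : posreal, exists P, Rbar_locally p_infty P /\ forall u v, P u -> P v -> ball (G u) eps (G v)).
  { intros eps.
    set (M := Rmax 1 (- ln eps)).
    assert (Hb : forall u v, M < u <= v -> RInt f u v < eps).
    { intros u v Huv.
      assert (HM1 : 1 <= M) by apply Rmax_l. assert (HM2 : - ln eps <= M) by apply Rmax_r.
      assert (H1 := gf_boundinf x u v ltac:(lra) ltac:(lra)). fold f in H1.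
      assert (exp (- u) < eps).
      { rewrite <- (exp_ln eps) by apply cond_pos. apply exp_increasing. lra. }
      pose proof (exp_pos (- v)). lra. }
    exists (fun y => M < y). split.
    - exists M. auto.
    - intros u v Hu Hv. apply ball_R.
      assert (HM1 : 1 <= M) by apply Rmax_l.
      rewrite Gdiff by lra.
      destruct (Rle_dec u v).
      + rewrite Rabs_pos_eq by (apply Hge; lra). apply Hb; lra.
      + rewrite (Hswap v u) by lra. rewrite Rabs_Ropp. rewrite Rabs_pos_eq by (apply Hge; lra). apply Hb; lra. }
  exact XX.
Qed.

Lemma GHI x (la lb : R) : 0 < x < 1 -> filterlim (RInt (fun s => Rpower s (x - 1) * exp (- s)) 1) (at_right 0) (locally la) -> filterlim (RInt (fun s => Rpower s (x - 1) * exp (- s)) 1) (Rbar_locally p_infty) (locally lb) -> is_RInt_gen (fun s => Rpower s (x - 1) * exp (- s)) (at_right 0) (Rbar_locally p_infty) (lb - la).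
Proof.
  intros Hx Hla Hlb.
  set (f := fun s => Rpower s (x - 1) * exp (- s)).
  set (G := fun y => RInt f 1 y).
  assert (Hex : forall u v, 0 < u -> 0 < v -> ex_RInt f u v) by (intros; apply gf_ex; auto).
  assert (Gdiff : forall u v, 0 < u -> 0 < v -> G v - G u = RInt f u v).
  { intros u v Hu Hv. unfold G.
    assert (H := RInt_Chasles f 1 u v (Hex 1 u ltac:(lra) Hu) (Hex u v Hu Hv)).
    change (RInt f 1 u + RInt f u v = RInt f 1 v) in H. lra. }
  assert (Hswap : forall u v, 0 < u -> 0 < v -> RInt f v u = - RInt f u v).
  { intros u v Hu Hv. rewrite <- (opp_RInt_swap f u v (Hex u v Hu Hv)). reflexivity. }
  assert (Hge : forall u v, 0 < u <= v -> 0 <= RInt f u v) by (intros; apply gf_RInt_ge0; auto).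
  fold G in Hla, Hlb.
  assert (HpQ : at_right 0 (fun y => 0 < y)).
  { exists (mkposreal 1 Rlt_0_1). intros y _ Hy. exact Hy. }
  assert (HpR : Rbar_locally p_infty (fun y => 0 < y)) by (exists 0; auto).
  assert (HDG : forall y, 0 < y -> is_derive G y (f y)).
  { intros y Hy. apply (is_derive_RInt f G 1 y).
    - exists (mkposreal y Hy). intros z Hz. apply ball_R in Hz. simpl in Hz.
      apply Rabs_lt_between' in Hz. unfold G. apply (@RInt_correct R_CompleteNormedModule). apply Hex; lra.
    - apply gf_cont; auto. }
  { apply (is_RInt_gen_ext (Derive G)).
    - apply (Filter_prod _ _ _ (fun y => 0 < y) (fun y => 0 < y) HpQ HpR).
      intros u v Hu Hv z Hz. simpl in Hz.
      assert (0 < Rmin u v) by (apply Rmin_glb_lt; auto).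
      apply is_derive_unique. apply HDG. lra.
    - apply is_RInt_gen_Derive.
      + apply (Filter_prod _ _ _ (fun y => 0 < y) (fun y => 0 < y) HpQ HpR).
        intros u v Hu Hv z Hz. simpl in Hz.
        assert (0 < Rmin u v) by (apply Rmin_glb_lt; auto).
        eexists. apply HDG. lra.
      + apply (Filter_prod _ _ _ (fun y => 0 < y) (fun y => 0 < y) HpQ HpR).
        intros u v Hu Hv z Hz. simpl in Hz.
        assert (0 < Rmin u v) by (apply Rmin_glb_lt; auto).
        apply (continuous_ext_loc (Derive G) f z).
        * exists (mkposreal z ltac:(lra)). intros y Hy. apply ball_R in Hy. simpl in Hy.
          apply Rabs_lt_between' in Hy. symmetry. apply is_derive_unique. apply HDG. lra.
        * apply gf_cont. lra.
      + exact Hla.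
      + exact Hlb. }
Qed.

Lemma Gbnd x (la lb : R) : 0 < x < 1 -> filterlim (RInt (fun s => Rpower s (x - 1) * exp (- s)) 1) (at_right 0) (locally la) -> filterlim (RInt (fun s => Rpower s (x - 1) * exp (- s)) 1) (Rbar_locally p_infty) (locally lb) -> 0 < lb - la.
Proof.
  intros Hx Hla Hlb.
  set (f := fun s => Rpower s (x - 1) * exp (- s)).
  set (G := fun y => RInt f 1 y).
  assert (Hex : forall u v, 0 < u -> 0 < v -> ex_RInt f u v) by (intros; apply gf_ex; auto).
  assert (Gdiff : forall u v, 0 < u -> 0 < v -> G v - G u = RInt f u v).
  { intros u v Hu Hv. unfold G.
    assert (H := RInt_Chasles f 1 u v (Hex 1 u ltac:(lra) Hu) (Hex u v Hu Hv)).
    change (RInt f 1 u + RInt f u v = RInt f 1 v) in H. lra. }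
  assert (Hswap : forall u v, 0 < u -> 0 < v -> RInt f v u = - RInt f u v).
  { intros u v Hu Hv. rewrite <- (opp_RInt_swap f u v (Hex u v Hu Hv)). reflexivity. }
  assert (Hge : forall u v, 0 < u <= v -> 0 <= RInt f u v) by (intros; apply gf_RInt_ge0; auto).
  fold G in Hla, Hlb.
  assert (Hev : at_right 0 (fun y => G y <= G (1/2))).
  { exists (mkposreal (1/2) ltac:(lra)). intros y Hy Hy0. apply ball_R in Hy. simpl in Hy.
    apply Rabs_lt_between' in Hy.
    assert (H := Gdiff y (1/2) Hy0 ltac:(lra)). assert (H2 := Hge y (1/2) ltac:(lra)).
    lra. }
  assert (Hla' : la <= G (1/2)).
  { destruct (Rle_dec la (G (1/2))) as [Hl|Hl]; [exact Hl|]. exfalso.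
    assert (He : 0 < la - G (1/2)) by lra.
    assert (Hb : at_right 0 (fun y => ball la (mkposreal _ He) (G y))).
    { apply Hla. apply locally_ball. }
    destruct (filter_ex _ (filter_and _ _ Hb Hev)) as [y [Hy1 Hy2]].
    apply ball_R in Hy1. simpl in Hy1. apply Rabs_lt_between' in Hy1. lra. }
  assert (Hev2 : Rbar_locally p_infty (fun y => 0 <= G y)).
  { exists 1. intros y Hy. change (0 <= RInt f 1 y). apply Hge. lra. }
  assert (Hlb' : 0 <= lb).
  { destruct (Rle_dec 0 lb) as [Hl|Hl]; [exact Hl|]. exfalso.
    assert (He : 0 < - lb) by lra.
    assert (Hb : Rbar_locally p_infty (fun y => ball lb (mkposreal _ He) (G y))).
    { apply Hlb. apply locally_ball. }
    destruct (filter_ex _ (filter_and _ _ Hb Hev2)) as [y [Hy1 Hy2]].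
    apply ball_R in Hy1. simpl in Hy1. apply Rabs_lt_between' in Hy1. lra. }
  assert (HG : G (1/2) < 0).
  { change (RInt f 1 (1/2) < 0). rewrite (Hswap (1/2) 1) by lra.
    assert (0 < RInt f (1/2) 1).
    { apply RInt_gt_0; [lra | |]. intros; apply gf_pos; lra. intros; apply gf_cont; lra. }
    lra. }
  lra.
Qed.

Lemma Gamma_pos x : 0 < x < 1 -> 0 < Gamma x.
Proof.
  intros Hx.
  assert (C0 := GC0 x Hx). assert (CI := GCI x Hx).
  destruct (proj1 (@filterlim_locally_cauchy R R_CompleteSpace (at_right 0) (at_right_proper_filter 0) _) C0) as [la Hla].
  destruct (proj1 (@filterlim_locally_cauchy R R_CompleteSpace (Rbar_locally p_infty) (Rbar_locally_filter p_infty) _) CI) as [lb Hlb].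
  assert (HI := GHI x la lb Hx Hla Hlb).
  assert (EG : Gamma x = lb - la).
  { unfold Gamma.
    exact (@is_RInt_gen_unique R_CompleteNormedModule (at_right 0) (Rbar_locally p_infty)
      (Proper_StrongProper _ (at_right_proper_filter 0)) (Proper_StrongProper _ (Rbar_locally_filter p_infty)) _ (lb - la) HI). }
  rewrite EG. apply (Gbnd x la lb Hx Hla Hlb).
Qed.

Lemma Zlin a b c al T K : a < b -> b < T ->
  K * RInt (fun s => (s - (a+b)/2) * (c * Rpower (T - s) (-al))) a b
  = RInt (fun s => (K * ((s - (a+b)/2) * c)) * Rpower (T - s) (-al)) a b.
Proof.
  intros Hab HbT. rewrite <- RInt_scal'; [| lra |].
  - apply RInt_ext_R; [lra|]. intros; ring.
  - intros s Hs. apply cont_mult'.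
    + apply (@ex_derive_continuous R_AbsRing R_NormedModule); auto_derive; exact I.
    + apply cont_mult'. apply cont_const'. apply cont_pw; lra.
Qed.

Definition Zi a b c al T := RInt (fun s => (s - (a+b)/2) * (c * Rpower (T - s) (-al))) a b.
Definition Ii a b c al T := RInt (fun s => ((b - s)/(b-a)*(c*al)) * Rpower (T - s) (-al-1)) a b.
Definition Ji a b c al T := RInt (fun s => ((s - a)/(b-a)*(c*al)) * Rpower (T - s) (-al-1)) a b.

Lemma AbsI a b c al T D C : a < b -> b < T -> 0 < al < 1 -> 0 < c -> 0 <= D -> D*(b-a) <= T - b ->
  C = 1 + 2*D/(1+al+D) ->
  Ii a b c al T > C * (2/(b-a)^2 * Zi a b c al T).
Proof.
  intros. assert (H6 := P1pos a b c al T D C H H0 H1 H2 H3 H4 H5).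
  rewrite <- Zlin in H6 by lra. unfold Ii, Zi.
  set (X := RInt (fun s => (s - (a+b)/2) * (c * Rpower (T - s) (-al))) a b) in *.
  set (Y := RInt (fun s => ((b - s)/(b-a)*(c*al)) * Rpower (T - s) (-al-1)) a b) in *.
  replace (- (C * (2 / (b - a) ^ 2)) * X) with (- (C * (2 / (b - a) ^ 2 * X))) in H6 by ring.
  lra.
Qed.

Lemma AbsJ a b c al T : a < b -> b < T -> 0 < al < 1 -> 0 < c ->
  Ji a b c al T > 3 * (2/(b-a)^2 * Zi a b c al T).
Proof.
  intros. assert (H6 := P2pos a b c al T H H0 H1 H2).
  rewrite <- Zlin in H6 by lra. unfold Ji, Zi.
  set (X := RInt (fun s => (s - (a+b)/2) * (c * Rpower (T - s) (-al))) a b) in *.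
  set (Y := RInt (fun s => ((s - a)/(b-a)*(c*al)) * Rpower (T - s) (-al-1)) a b) in *.
  replace (- (3 * (2 / (b - a) ^ 2)) * X) with (- (3 * (2 / (b - a) ^ 2 * X))) in H6 by ring.
  lra.
Qed.

Lemma AbsImono a b c al T1 T2 D C : a < b -> b < T2 -> T2 < T1 -> 0 < al < 1 -> 0 < c -> 0 <= D ->
  D*(b-a) <= T2 - b -> C = 1 + 2*D/(1+al+D) ->
  Ii a b c al T1 - C * (2/(b-a)^2 * Zi a b c al T1) < Ii a b c al T2 - C * (2/(b-a)^2 * Zi a b c al T2).
Proof.
  intros.
  assert (H7 := mono_gen (fun s => (b - s)/(b-a)*(c*al)) (fun s => (-(C*(2/(b-a)^2)))*((s - (a+b)/2)*c))
     (-al-1) (-al) a b T1 T2 ltac:(lra) H0 H1).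
  cbv beta in H7.
  rewrite <- !Zlin in H7 by lra. unfold Ii, Zi.
  replace (- (C * (2 / (b - a) ^ 2)) * RInt (fun s => (s - (a+b)/2) * (c * Rpower (T1 - s) (-al))) a b)
    with (- (C * (2 / (b - a) ^ 2 * RInt (fun s => (s - (a+b)/2) * (c * Rpower (T1 - s) (-al))) a b))) in H7 by ring.
  replace (- (C * (2 / (b - a) ^ 2)) * RInt (fun s => (s - (a+b)/2) * (c * Rpower (T2 - s) (-al))) a b)
    with (- (C * (2 / (b - a) ^ 2 * RInt (fun s => (s - (a+b)/2) * (c * Rpower (T2 - s) (-al))) a b))) in H7 by ring.
  cut (RInt (fun s => (b - s) / (b - a) * (c * al) * Rpower (T1 - s) (- al - 1)) a b +
       - (C * (2 / (b - a) ^ 2 * RInt (fun s => (s - (a + b) / 2) * (c * Rpower (T1 - s) (- al))) a b)) <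
       RInt (fun s => (b - s) / (b - a) * (c * al) * Rpower (T2 - s) (- al - 1)) a b +
       - (C * (2 / (b - a) ^ 2 * RInt (fun s => (s - (a + b) / 2) * (c * Rpower (T2 - s) (- al))) a b))); [lra|].
  apply H7.
  - polycont.
  - polycont.
  - intros T HT. apply (P1neg a b c al T D C); lra.
Qed.

Lemma AbsJmono a b c al T1 T2 : a < b -> b < T2 -> T2 < T1 -> 0 < al < 1 -> 0 < c ->
  Ji a b c al T1 - 3 * (2/(b-a)^2 * Zi a b c al T1) < Ji a b c al T2 - 3 * (2/(b-a)^2 * Zi a b c al T2).
Proof.
  intros.
  assert (H7 := mono_gen (fun s => (s - a)/(b-a)*(c*al)) (fun s => (-(3*(2/(b-a)^2)))*((s - (a+b)/2)*c))
     (-al-1) (-al) a b T1 T2 ltac:(lra) H0 H1).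
  cbv beta in H7.
  rewrite <- !Zlin in H7 by lra. unfold Ji, Zi.
  replace (- (3 * (2 / (b - a) ^ 2)) * RInt (fun s => (s - (a+b)/2) * (c * Rpower (T1 - s) (-al))) a b)
    with (- (3 * (2 / (b - a) ^ 2 * RInt (fun s => (s - (a+b)/2) * (c * Rpower (T1 - s) (-al))) a b))) in H7 by ring.
  replace (- (3 * (2 / (b - a) ^ 2)) * RInt (fun s => (s - (a+b)/2) * (c * Rpower (T2 - s) (-al))) a b)
    with (- (3 * (2 / (b - a) ^ 2 * RInt (fun s => (s - (a+b)/2) * (c * Rpower (T2 - s) (-al))) a b))) in H7 by ring.
  cut (RInt (fun s => (s - a) / (b - a) * (c * al) * Rpower (T1 - s) (- al - 1)) a b +
       - (3 * (2 / (b - a) ^ 2 * RInt (fun s => (s - (a + b) / 2) * (c * Rpower (T1 - s) (- al))) a b)) <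
       RInt (fun s => (s - a) / (b - a) * (c * al) * Rpower (T2 - s) (- al - 1)) a b +
       - (3 * (2 / (b - a) ^ 2 * RInt (fun s => (s - (a + b) / 2) * (c * Rpower (T2 - s) (- al))) a b))); [lra|].
  apply H7.
  - polycont.
  - polycont.
  - intros T HT. apply (P2neg a b c al T); lra.
Qed.

Lemma varpi1_eq al t n s : varpi1 al t n s = (/ Gamma (1 - al)) * Rpower (tnth (al/2) t n - s) (-al).
Proof. unfold varpi1, omega. replace (1 - al - 1) with (-al) by ring. unfold Rdiv. ring. Qed.

Lemma varpi2_eq al t n s : s < tnth (al/2) t n ->
  varpi2 al t n s = (/ Gamma (1 - al)) * al * Rpower (tnth (al/2) t n - s) (-al-1).
Proof.
  intros Hs. unfold varpi2. apply is_derive_unique.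
  eapply is_derive_ext. { intros y. symmetry. apply varpi1_eq. }
  eapply is_derive_val.
  - apply (is_derive_scal (fun y => Rpower (tnth (al/2) t n - y) (-al)) s (/ Gamma (1 - al))).
    apply dpw; auto.
  - unfold scal; simpl; unfold mult; simpl.
    replace (-al - 1) with (-al - 1) by ring. ring.
Qed.

Lemma mesh_lt (t : nat -> R) N : (forall k, (k < N)%nat -> t k < t (S k)) ->
  forall i j, (i < j)%nat -> (j <= N)%nat -> t i < t j.
Proof.
  intros Hm i j. induction j; intros Hij HjN. lia.
  destruct (Nat.eq_dec i j). subst. apply Hm; lia.
  apply Rlt_trans with (t j). apply IHj; lia. apply Hm; lia.
Qed.

Lemma mesh_le (t : nat -> R) N : (forall k, (k < N)%nat -> t k < t (S k)) ->
  forall i j, (i <= j)%nat -> (j <= N)%nat -> t i <= t j.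
Proof.
  intros Hm i j Hij HjN. destruct (Nat.eq_dec i j). subst; lra.
  left; apply (mesh_lt t N Hm); lia.
Qed.

Lemma Icoef_Ii al t n k : t (k-1)%nat < t k -> t k < tnth (al/2) t n ->
  Icoef al t n k = Ii (t (k-1)%nat) (t k) (/ Gamma (1 - al)) al (tnth (al/2) t n).
Proof.
  intros Hab HbT. unfold Icoef, Ii, tau. apply RInt_ext_R; [lra|].
  intros s Hs. rewrite varpi2_eq by lra. ring.
Qed.

Lemma Jcoef_Ji al t n k : t (k-1)%nat < t k -> t k < tnth (al/2) t n ->
  Jcoef al t n k = Ji (t (k-1)%nat) (t k) (/ Gamma (1 - al)) al (tnth (al/2) t n).
Proof.
  intros Hab HbT. unfold Jcoef, Ji, tau. apply RInt_ext_R; [lra|].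
  intros s Hs. rewrite varpi2_eq by lra. ring.
Qed.

Lemma zeta_Zi al t n k : t (k-1)%nat < t k ->
  zeta al t n k = 2 / (t k - t (k-1)%nat)^2 * Zi (t (k-1)%nat) (t k) (/ Gamma (1 - al)) al (tnth (al/2) t n).
Proof.
  intros Hab. unfold zeta, Zi, tau. f_equal. apply RInt_ext_R; [lra|].
  intros s Hs. rewrite varpi1_eq. ring.
Qed.

Theorem lemma4p3 (alpha T : R) (N : nat) (t : nat -> R)
  (Halpha : 0 < alpha < 1)
  (Ht0 : t 0%nat = 0) (HtN : t N = T)
  (Hmono : forall k : nat, (k < N)%nat -> t k < t (S k))
  (n : nat) (Hn2 : (2 <= n)%nat) (HnN : (n <= N)%nat) :
  (* (i) *)
  (forall k : nat, (1 <= k <= n - 1)%nat ->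
     Icoef alpha t n k > (1 + betak alpha t (S k)) * zeta alpha t n k) /\
  (forall k : nat, (1 <= k <= n - 2)%nat ->
     Icoef alpha t n k - (1 + betak alpha t (S k)) * zeta alpha t n k
     < Icoef alpha t (n - 1) k - (1 + betak alpha t (S k)) * zeta alpha t (n - 1) k) /\
  (* (ii) *)
  (forall k : nat, (1 <= k <= n - 1)%nat ->
     Jcoef alpha t n k > 3 * zeta alpha t n k) /\
  (forall k : nat, (1 <= k <= n - 2)%nat ->
     Jcoef alpha t n k - 3 * zeta alpha t n k
     < Jcoef alpha t (n - 1) k - 3 * zeta alpha t (n - 1) k) /\
  (* (iii) *)
  rr t n * zeta alpha t n (n - 1) < alpha / (3 * (2 - alpha)) * varpi1 alpha t n (t (n - 1)%nat).
Proof.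
  set (c := / Gamma (1 - alpha)).
  assert (Hc : 0 < c) by (apply Rinv_0_lt_compat; apply Gamma_pos; lra).
  assert (Hlt := mesh_lt t N Hmono). assert (Hle := mesh_le t N Hmono).
  assert (HTm : forall m, (1 <= m <= N)%nat ->
     t (m - 1)%nat < tnth (alpha/2) t m /\
     tnth (alpha/2) t m - t (m-1)%nat = (1 - alpha/2) * (t m - t (m-1)%nat)).
  { intros m Hm. assert (t (m-1)%nat < t m) by (apply Hlt; lia).
    unfold tnth. split; nra. }
  assert (HD : forall m k, (1 <= m <= N)%nat -> (k <= m - 1)%nat ->
     (1 - alpha/2) * (t (S k) - t k) <= tnth (alpha/2) t m - t k).
  { intros m k Hm Hk. destruct (HTm m Hm) as [H1 H2].
    destruct (Nat.eq_dec (S k) m).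
    - subst m. replace (S k - 1)%nat with k in * by lia. lra.
    - assert (t (S k) <= t (m-1)%nat) by (apply Hle; lia).
      assert (t k < t (S k)) by (apply Hmono; lia). nra. }
  assert (Hab : forall k, (1 <= k)%nat -> (k <= N)%nat -> t (k-1)%nat < t k).
  { intros k Hk HkN. apply Hlt; lia. }
  assert (HbT : forall m k, (1 <= m <= N)%nat -> (k <= m - 1)%nat -> t k < tnth (alpha/2) t m).
  { intros m k Hm Hk. destruct (HTm m Hm) as [H1 _]. assert (t k <= t (m-1)%nat) by (apply Hle; lia). lra. }
  assert (HDpos : forall k, (1 <= k)%nat -> (S k <= N)%nat -> 0 <= (1 - alpha/2) * rr t (S k)).
  { intros k Hk HkN. unfold rr, tau. replace (S k - 1)%nat with k by lia.
    assert (t k < t (S k)) by (apply Hmono; lia). assert (t (k-1)%nat < t k) by (apply Hab; lia).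
    apply Rmult_le_pos; [lra|]. left; apply Rdiv_lt_0_compat; lra. }
  assert (HDh : forall k, (1 <= k)%nat -> (S k <= N)%nat ->
     (1 - alpha/2) * rr t (S k) * (t k - t (k-1)%nat) = (1 - alpha/2) * (t (S k) - t k)).
  { intros k Hk HkN. unfold rr, tau. replace (S k - 1)%nat with k by lia.
    assert (t (k-1)%nat < t k) by (apply Hab; lia). field. lra. }
  assert (HC : forall k, 1 + betak alpha t (S k) = 1 + 2 * ((1 - alpha/2) * rr t (S k)) / (1 + alpha + (1 - alpha/2) * rr t (S k))).
  { intros k. unfold betak. unfold Rdiv. ring. }
  split; [|split; [|split; [|split]]].
  -
    intros k Hk.
    rewrite (Icoef_Ii alpha t n k) by (try apply Hab; try apply (HbT n k); lia).
    rewrite (zeta_Zi alpha t n k) by (apply Hab; lia).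
    apply (AbsI _ _ _ _ _ ((1 - alpha/2) * rr t (S k))); auto.
    + apply Hab; lia.
    + apply (HbT n k); lia.
    + apply HDpos; lia.
    + rewrite HDh by lia. apply (HD n k); lia.
  -
    intros k Hk.
    rewrite (Icoef_Ii alpha t n k) by (try apply Hab; try apply (HbT n k); lia).
    rewrite (zeta_Zi alpha t n k) by (apply Hab; lia).
    rewrite (Icoef_Ii alpha t (n-1) k) by (try apply Hab; try apply (HbT (n-1)%nat k); lia).
    rewrite (zeta_Zi alpha t (n-1) k) by (apply Hab; lia).
    apply (AbsImono _ _ _ _ _ _ ((1 - alpha/2) * rr t (S k))); auto.
    + apply Hab; lia.
    + apply (HbT (n-1)%nat k); lia.
    + unfold tnth. replace (n - 1 - 1)%nat with (n - 2)%nat by lia.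
      assert (t (n-2)%nat < t (n-1)%nat) by (apply Hlt; lia).
      assert (t (n-1)%nat < t n) by (apply Hlt; lia). nra.
    + apply HDpos; lia.
    + rewrite HDh by lia. apply (HD (n-1)%nat k); lia.
  -
    intros k Hk.
    rewrite (Jcoef_Ji alpha t n k) by (try apply Hab; try apply (HbT n k); lia).
    rewrite (zeta_Zi alpha t n k) by (apply Hab; lia).
    apply AbsJ; auto.
    + apply Hab; lia.
    + apply (HbT n k); lia.
  -
    intros k Hk.
    rewrite (Jcoef_Ji alpha t n k) by (try apply Hab; try apply (HbT n k); lia).
    rewrite (zeta_Zi alpha t n k) by (apply Hab; lia).
    rewrite (Jcoef_Ji alpha t (n-1) k) by (try apply Hab; try apply (HbT (n-1)%nat k); lia).
    rewrite (zeta_Zi alpha t (n-1) k) by (apply Hab; lia).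
    apply AbsJmono; auto.
    + apply Hab; lia.
    + apply (HbT (n-1)%nat k); lia.
    + unfold tnth. replace (n - 1 - 1)%nat with (n - 2)%nat by lia.
      assert (t (n-2)%nat < t (n-1)%nat) by (apply Hlt; lia).
      assert (t (n-1)%nat < t n) by (apply Hlt; lia). nra.
  -
    rewrite (zeta_Zi alpha t n (n-1)) by (apply Hab; lia).
    rewrite varpi1_eq. fold c.
    set (a := t (n - 1 - 1)%nat). set (b := t (n-1)%nat). set (Tn := tnth (alpha/2) t n).
    assert (Hab' : a < b) by (apply Hab; lia).
    destruct (HTm n ltac:(lia)) as [HbT' HTb]. fold b Tn in HbT', HTb.
    assert (Hbn : b < t n) by (apply Hlt; lia).
    assert (HP3 := P3 a b c alpha Tn Hab' HbT' Halpha Hc). fold (Zi a b c alpha Tn) in HP3.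
    assert (Err : rr t n = (t n - b) / (b - a)).
    { unfold rr, tau. reflexivity. }
    rewrite Err.
    rewrite (PWQ (Tn - b) (-alpha) (-alpha-1) 1) by (first [lra | simpl; ring]).
    set (P := Rpower (Tn - b) (-alpha-1)) in *.
    assert (HP : 0 < P) by apply Rpower_pos'.
    apply Rlt_le_trans with ((t n - b) / (b - a) * (2 / (b - a) ^ 2) * (c * alpha / 2 * P * (b - a) ^ 3 / 6)).
    + rewrite <- Rmult_assoc. apply Rmult_lt_compat_l; auto.
      apply Rmult_lt_0_compat. apply Rdiv_lt_0_compat; lra. apply Rdiv_lt_0_compat; [lra|]. apply pow_lt; lra.
    + right. rewrite HTb. field. lra.
Qed.
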